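(* Let $\mu$ be a probability measure on $\mathbb{R}^d$ and $\nu=\sum_{i=1}^M w_i\delta_{y_i}$ a discrete probability measure ($w_i>0$, $\sum_i w_i=1$), and let $c:\mathbb{R}^d\times\mathbb{R}^d\to[0,\infty)$ be a nonnegative cost. Suppose that the optimal transport problem between $\mu$ and $\nu$ with cost $c$ is well-posed, that strong duality holds, and that the semi-dual problem $\min_{\mathbf g\in\mathbb{R}^M} H(\mathbf g)$ admits a minimum. Let $K\subset\mathbb{R}^d$ be any compact set with $\mu(K)\ge 1-\frac12\min_j w_j$. Then there exists a minimizer $\mathbf g^*$ of $H$ contained in $$\mathcal C:=\{\mathbf g\in\mathbb{R}^M : |g_j|\le \|c\|_{K,\infty}\ \text{for all } j\},\qquad \|c\|_{K,\infty}:=\sup_{x\in K,\ j\in\{1,\dots,M\}}|c(x,y_j)|.$$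
   Context: For $\mathbf g=(g_1,\dots,g_M)\in\mathbb{R}^M$, the $c$-transform is $\mathbf g^c(x)=\min_{1\le i\le M}\{c(x,y_i)-g_i\}$, and the (convex) semi-dual objective is $H(\mathbf g)=\mathbb{E}_{X\sim\mu}[-\mathbf g^c(X)]-\sum_{j=1}^M w_jg_j$. Its minimum value equals minus the optimal transport cost $\min_{\pi\in\Pi(\mu,\nu)}\int c\,d\pi$ (up to the sign convention). Laguerre cells: $\mathbb L_j(\mathbf g)=\{x:\mathbf g^c(x)=c(x,y_j)-g_j\}$. *)

(* Defs.v *)
From HB Require Import structures.
From mathcomp Require Import all_boot all_order all_algebra.
From mathcomp Require Import all_classical all_reals all_analysis.
Set Implicit Arguments. Unset Strict Implicit. Unset Printing Implicit Defensive.
Import Order.TTheory GRing.Theory Num.Theory.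
Import numFieldNormedType.Exports.
Local Open Scope classical_set_scope.
Local Open Scope ring_scope.

(* R^d (row vectors) equipped with its Borel sigma-algebra
   (the sigma-algebra generated by the open sets of its standard topology). *)
Definition Rd (R : realType) (d : nat) : Type :=
  g_sigma_algebraType (@open 'rV[R]_d).

Section OT.
Context (R : realType) (d M : nat).
Local Notation X := (Rd R d).

Definition nu_disc (y : 'I_M -> 'rV[R]_d) (w : 'I_M -> R) (B : set X) : \bar R :=
  (\sum_(i < M) (w i)%:E * \d_(y i : X) B)%E.

Definition coupling (mu : probability X R) (y : 'I_M -> 'rV[R]_d) (w : 'I_M -> R)
  (pi : probability (X * X)%type R) : Prop :=
  (forall A : set X, measurable A -> pi (A `*` setT) = mu A) /\
  (forall B : set X, measurable B -> pi (setT `*` B) = nu_disc y w B).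

Definition transport_cost (c : 'rV[R]_d -> 'rV[R]_d -> R)
  (pi : probability (X * X)%type R) : \bar R :=
  (\int[pi]_z (c z.1 z.2)%:E)%E.

Definition OT_value (mu : probability X R) (y : 'I_M -> 'rV[R]_d) (w : 'I_M -> R)
  (c : 'rV[R]_d -> 'rV[R]_d -> R) : \bar R :=
  ereal_inf [set transport_cost c pi | pi in coupling mu y w].

(* c-transform  g^c(x) = min_i (c(x,y_i) - g_i)  (with the convention +oo for M = 0). *)
Definition ctrans (c : 'rV[R]_d -> 'rV[R]_d -> R) (y : 'I_M -> 'rV[R]_d)
  (g : 'I_M -> R) (x : X) : \bar R :=
  (\big[mine/+oo]_(i < M) (c x (y i) - g i)%:E)%E.

Definition Hsd (mu : probability X R) (y : 'I_M -> 'rV[R]_d) (w : 'I_M -> R)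
  (c : 'rV[R]_d -> 'rV[R]_d -> R) (g : 'I_M -> R) : \bar R :=
  (\int[mu]_x (- ctrans c y g x) - (\sum_(j < M) w j * g j)%:E)%E.

Definition OT_well_posed (mu : probability X R) (y : 'I_M -> 'rV[R]_d) (w : 'I_M -> R)
  (c : 'rV[R]_d -> 'rV[R]_d -> R) : Prop :=
  measurable_fun [set: (X * X)%type] (fun z : (X * X)%type => c z.1 z.2) /\
  exists pi, coupling mu y w pi /\ transport_cost c pi = OT_value mu y w c /\
             transport_cost c pi \is a fin_num.

Definition strong_duality (mu : probability X R) (y : 'I_M -> 'rV[R]_d) (w : 'I_M -> R)
  (c : 'rV[R]_d -> 'rV[R]_d -> R) : Prop :=
  ereal_inf (range (Hsd mu y w c)) = (- OT_value mu y w c)%E.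

Definition cnormK (c : 'rV[R]_d -> 'rV[R]_d -> R) (y : 'I_M -> 'rV[R]_d)
  (K : set 'rV[R]_d) : \bar R :=
  ereal_sup [set e | exists x j, K x /\ e = (`|c x (y j)|)%:E].

End OT.

(* Main.v *)
Require Import Defs.
From HB Require Import structures.
From mathcomp Require Import all_boot all_order all_algebra.
From mathcomp Require Import all_classical all_reals all_analysis.
From mathcomp Require Import ring lra.
From mathcomp Require Import measurable_realfun.
Import Order.TTheory GRing.Theory Num.Theory.
Import numFieldNormedType.Exports.
Local Open Scope classical_set_scope.
Local Open Scope ring_scope.

Lemma esum_lem (R : realFieldType) (M : nat) (w g : 'I_M -> R) (j : 'I_M) (eps : R) :
  \sum_(i < M) w i * (g i + eps * (i == j)%:R) = \sum_(i < M) w i * g i + eps * w j.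
Proof.
under eq_bigr do rewrite mulrDr; rewrite big_split; congr (_ + _).
rewrite (bigD1 j) //= eqxx mulr1 big1 ?addr0; first by rewrite mulrC.
by move=> i /negbTE ->; rewrite mulr0 mulr0.
Qed.

Lemma sum_shift (R : realFieldType) (M : nat) (w g : 'I_M -> R) (t : R) :
  \sum_(i < M) w i = 1 ->
  \sum_(i < M) w i * (g i - t) = \sum_(i < M) w i * g i - t.
Proof.
move=> ws; under eq_bigr do rewrite mulrBr.
by rewrite sumrB -mulr_suml ws mul1r.
Qed.

Section Aux.
Context (R : realType) (d M : nat) (y : 'I_M -> 'rV[R]_d) (c : 'rV[R]_d -> 'rV[R]_d -> R).
Local Notation X := (Rd R d).

Lemma ct_le (g : 'I_M -> R) (x : X) i :
  (ctrans c y g x <= (c x (y i) - g i)%:E)%E.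
Proof. exact: bigmin_le. Qed.

Lemma ct_eq (i0 : 'I_M) (g : 'I_M -> R) (x : X) :
  exists i, ctrans c y g x = (c x (y i) - g i)%:E.
Proof.
have [i _ E] := @eq_bigmin _ _ _ +oo%E i0 predT (fun i => (c x (y i) - g i)%:E) isT
  (fun i _ => leey _).
by exists i; rewrite -E.
Qed.

Lemma ct_shift (i0 : 'I_M) (g : 'I_M -> R) (t : R) (x : X) :
  ctrans c y (fun i => g i - t) x = (ctrans c y g x + t%:E)%E.
Proof.
have h1 := ct_le (fun i => g i - t) x.
have h2 := ct_le g x.
have [i E1] := ct_eq i0 (fun i => g i - t) x.
have [k E2] := ct_eq i0 g x.
move: (h1 k) (h2 i); rewrite E1 E2 -EFinD !lee_fin => a b.
congr (_%:E); lra.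
Qed.

Lemma ct_meas (g : 'I_M -> R) :
  measurable_fun [set: (X * X)%type] (fun z : (X * X)%type => c z.1 z.2) ->
  measurable_fun [set: X] (ctrans c y g).
Proof.
move=> mc; rewrite /ctrans.
have mi : forall i, measurable_fun [set: X] (fun x : X => (c x (y i) - g i)%:E).
  move=> i; apply/measurable_EFinP; apply: measurable_funB => //.
  exact: (measurable_fun_pair1 (y i : X) mc).
elim: (index_enum _) => [|i s IH].
  under eq_fun do rewrite big_nil; exact: measurable_cst.
under eq_fun do rewrite big_cons /=.
exact: measurable_mine.
Qed.

Lemma Lint (mu : probability X R) (f : X -> \bar R) (B : R) :
  measurable_fun [set: X] f -> (forall x, (f x <= B%:E)%E) ->
  (\int[mu]_x f x)%E \is a fin_num -> mu.-integrable [set: X] f.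
Proof.
move=> mf fB fin; apply/integrableP; split => //.
have mp := measurable_funepos mf; have mn := measurable_funeneg mf.
have hp : (\int[mu]_x f^\+ x)%E \is a fin_num.
  rewrite ge0_fin_numE; last by apply: integral_ge0 => x _; exact: funepos_ge0.
  apply: (@le_lt_trans _ _ (\int[mu]_x (cst (Num.max B 0)%:E) x)%E).
    apply: ge0_le_integral => //.
    move=> x _; rewrite funeposE /= ge_max; apply/andP; split.
        by apply: le_trans (fB x) _; rewrite lee_fin le_max lexx.
      by rewrite lee_fin le_max lexx orbT.
  rewrite integral_cst //; apply: lte_mul_pinfty => //.
    by rewrite lee_fin le_max lexx orbT.
  by apply: (@le_lt_trans _ _ 1%E); [exact: probability_le1|exact: ltry].
have hn : (\int[mu]_x f^\- x)%E \is a fin_num.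
  by move: fin; rewrite integralE fin_numB => /andP[_ ->].
have -> : (fun x => `|f x|)%E = (fun x => f^\+ x + f^\- x)%E.
  by apply/funext => x; have := fune_abse f; move/(congr1 (fun h => h x)).
rewrite ge0_integralD //.
have : (\int[mu]_x f^\+ x + \int[mu]_x f^\- x)%E \is a fin_num by rewrite fin_numD hp hn.
by rewrite fin_numElt => /andP[].
Qed.

Definition Sset (g : 'I_M -> R) (j : 'I_M) (eps : R) : set X :=
  [set x : X | forall i, g i - c x (y i) <= g j + eps - c x (y j)].

Definition gup (g : 'I_M -> R) (j : 'I_M) (eps : R) : 'I_M -> R :=
  fun i => g i + eps * (i == j)%:R.

Lemma pt_ineq (i0 : 'I_M) (g : 'I_M -> R) (j : 'I_M) (eps : R) (x : X) : 0 <= eps ->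
  (- ctrans c y g x <= - ctrans c y (gup g j eps) x)%E /\
  (- ctrans c y (gup g j eps) x <= - ctrans c y g x + (eps * \1_(Sset g j eps) x)%:E)%E.
Proof.
move=> e0.
have h1 := ct_le g x; have h2 := ct_le (gup g j eps) x.
have [k E1] := ct_eq i0 g x; have [l E2] := ct_eq i0 (gup g j eps) x.
have hk := h2 k; have hl := h1 l.
rewrite E1 E2 !lee_fin /gup in hk hl *.
split.
  move: hk; case: (k =P j) => _; rewrite ?mulr1 ?mulr0; lra.
case: (pselect (Sset g j eps x)) => Sx.
  rewrite indicE mem_set // mulr1.
  move: hl; case: (l =P j) => _; rewrite ?mulr1 ?mulr0; lra.
rewrite indicE memNset // mulr0 addr0.
have [i /negP] : exists i, ~ (g i - c x (y i) <= g j + eps - c x (y j)).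
  by apply/existsNP.
rewrite -ltNge => hi.
have hi2 := h2 i; rewrite E2 lee_fin /gup in hi2.
move: hl hi2; case: (l =P j) => [->|_]; case: (i =P j) => [eij|_];
  rewrite ?mulr1 ?mulr0 //; try lra.
Qed.

Lemma mS_meas (g : 'I_M -> R) (j : 'I_M) (eps : R) :
  measurable_fun [set: (X * X)%type] (fun z : (X * X)%type => c z.1 z.2) ->
  measurable (Sset g j eps).
Proof.
move=> mc.
have mfc : forall i, measurable_fun [set: X] (fun x : X => c x (y i)).
  by move=> i; exact: (measurable_fun_pair1 (y i : X) mc).
have -> : Sset g j eps = \bigcap_(i in [set: 'I_M])
    ([set: X] `&` [set x | g i - c x (y i) <= g j + eps - c x (y j)]).
  apply/seteqP; split => x /=.
    by move=> h i _; split => //; exact: h i.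
  by move=> h i; have [] := h i I.
apply: fin_bigcap_measurable; first exact: finite_finset.
move=> i _; apply: measurable_fun_le => //.
  by apply: measurable_funB => //; exact: mfc.
by apply: measurable_funB => //; exact: mfc.
Qed.

Lemma negct_bound (i0 : 'I_M) (g : 'I_M -> R) (x : X) :
  (forall x z, 0 <= c x z) ->
  (- ctrans c y g x <= (\big[Order.max/0]_i g i)%:E)%E.
Proof.
move=> c0; have [k ->] := ct_eq i0 g x.
rewrite -EFinN lee_fin; apply: le_trans (le_bigmax _ _ k).
have := c0 x (y k); lra.
Qed.

Lemma key (mu : probability X R) (w : 'I_M -> R) (i0 : 'I_M) (g : 'I_M -> R) :
  (forall x z, 0 <= c x z) ->
  measurable_fun [set: (X * X)%type] (fun z : (X * X)%type => c z.1 z.2) ->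
  (forall h, (Hsd mu y w c g <= Hsd mu y w c h)%E) ->
  Hsd mu y w c g \is a fin_num ->
  forall j eps, 0 < eps -> ((w j)%:E <= mu (Sset g j eps))%E.
Proof.
move=> c0 mc gmin Hfin j eps e0.
have mS := mS_meas g j eps mc.
pose f := fun x => (- ctrans c y g x)%E.
pose f' := fun x => (- ctrans c y (gup g j eps) x)%E.
have mf : measurable_fun [set: X] f.
  by apply: measurableT_comp; [exact: oppe_measurable|exact: ct_meas].
have mf' : measurable_fun [set: X] f'.
  by apply: measurableT_comp; [exact: oppe_measurable|exact: ct_meas].
have finf : (\int[mu]_x f x)%E \is a fin_num.
  by move: Hfin; rewrite /Hsd fin_numB => /andP[].
have intf : mu.-integrable [set: X] f.
  by apply: (@Lint mu f _ mf _ finf) => x; exact: negct_bound.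
have intS : mu.-integrable [set: X] (fun x => (eps * \1_(Sset g j eps) x)%:E).
  exact: (integrableZl measurableT eps (integrable_indic mu mS)).
have intf' : mu.-integrable [set: X] f'.
  apply: (le_integrable measurableT mf' _
    (integrableD measurableT (integrable_abse intf)
      (finite_measure_integrable_cst mu eps measurableT))).
  move=> x _; have [h1 h2] := pt_ineq i0 g j eps x (ltW e0).
  rewrite /f /f'.
  have [k Ek] := ct_eq i0 g x; have [l El] := ct_eq i0 (gup g j eps) x.
  move: h1 h2; rewrite Ek El /= !lee_fin => h1 h2.
  rewrite ?Ek ?El.
  rewrite -?EFinN ?abse_EFin lee_fin.
  set a := - (c x (y k) - g k) in h1 h2 *.
  set b := - (c x (y l) - gup g j eps l) in h1 h2 *.
  rewrite (ger0_norm (addr_ge0 (normr_ge0 a) (ltW e0))).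
  have := lexx `|a|; rewrite ler_norml => /andP[na1 na2].
  move: h2; rewrite indicE; case: (x \in _); rewrite ?mulr1 ?mulr0 => h2;
    rewrite ler_norml; apply/andP; split; lra.
have ifs := integrableD measurableT intf intS.
have hI : (\int[mu]_x f' x <= \int[mu]_x (f x + (eps * \1_(Sset g j eps) x)%:E))%E.
  apply: (le_integral measurableT intf' ifs) => x _.
  exact: (pt_ineq i0 g j eps x (ltW e0)).2.
rewrite (integralD measurableT intf intS) in hI.
have eS : (\int[mu]_x (eps * \1_(Sset g j eps) x)%:E = eps%:E * mu (Sset g j eps))%E.
  under eq_integral do rewrite EFinM.
  by rewrite (integralZl measurableT (integrable_indic mu mS)) integral_indic // setIT.
rewrite eS in hI.
have hH := gmin (gup g j eps); rewrite /Hsd -/f -/f' in hH.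
have esum : \sum_(i < M) w i * gup g j eps i = \sum_(i < M) w i * g i + eps * w j.
  by rewrite /gup; exact: esum_lem.
rewrite esum in hH.
have finf' := integrable_fin_num measurableT intf'.
have finS : mu (Sset g j eps) \is a fin_num by exact: fin_num_measure.
move: hI hH; rewrite -(fineK finf) -(fineK finf') -(fineK finS).
rewrite -?EFinM -?EFinB -?EFinD !lee_fin => hI hH.
rewrite -(ler_pM2l e0); lra.
Qed.

End Aux.
Theorem lemma3p1 (R : realType) (d M : nat) (mu : probability (Rd R d) R)
  (y : 'I_M -> 'rV[R]_d) (w : 'I_M -> R) (c : 'rV[R]_d -> 'rV[R]_d -> R) :
  (forall j, 0 < w j) -> \sum_(j < M) w j = 1 ->
  (forall x z, 0 <= c x z) ->
  OT_well_posed mu y w c ->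
  strong_duality mu y w c ->
  (exists g0 : 'I_M -> R, forall g, (Hsd mu y w c g0 <= Hsd mu y w c g)%E) ->
  forall K : set 'rV[R]_d, compact K ->
  ((1 - inf (range w) / 2)%:E <= mu K)%E ->
  exists gs : 'I_M -> R,
    (forall g, (Hsd mu y w c gs <= Hsd mu y w c g)%E) /\
    (forall j, ((`|gs j|)%:E <= cnormK c y K)%E).
Proof.
move=> wpos wsum c0 [mc [pi [cpl [piopt pifin]]]] sd [g0 g0min] K cK muK.
case: (pselect (exists i : 'I_M, True)) => [[i0 _]|noI]; last first.
  by exists g0; split => // j; exfalso; apply: noI; exists j.
have Hfin : Hsd mu y w c g0 \is a fin_num.
  have -> : Hsd mu y w c g0 = ereal_inf (range (Hsd mu y w c)).
    apply/eqP; rewrite eq_le; apply/andP; split.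
      by apply: le_ereal_inf_tmp => _ [h _ <-]; exact: g0min.
    by apply: ereal_inf_lbound; exists g0.
  by rewrite sd fin_numN -piopt.
have mK : measurable (K : set (Rd R d)).
  have cl : closed K := compact_closed (@norm_hausdorff _ _) cK.
  have mC : measurable (~` K : set (Rd R d)).
    by apply: sub_sigma_algebra; exact: closed_openC.
  by rewrite -(setCK K); exact: measurableC.
have exK : forall j eps, 0 < eps -> exists x, K x /\ Sset R d M y c g0 j eps x.
  move=> j eps e0; apply: contrapT => hn.
  have mS := mS_meas R d M y c g0 j eps mc.
  have dis : Sset R d M y c g0 j eps `&` K = set0.
    by apply/seteqP; split => x // [Sx Kx]; apply: hn; exists x.
  have hk := key R d M y c mu w i0 g0 c0 mc g0min Hfin j eps e0.
  have h0 : (mu (Sset R d M y c g0 j eps `|` K) <= 1)%E.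
    by apply: probability_le1; exact: measurableU.
  rewrite measureU // in h0.
  have h1 : (mu (Sset R d M y c g0 j eps) + mu K <= 1)%E := h0.
  have hinf : inf (range w) <= w j.
    apply: ge_inf; last by exists j.
    by exists 0 => _ [i _ <-]; exact: ltW.
  have finS : mu (Sset R d M y c g0 j eps) \is a fin_num by exact: fin_num_measure.
  have finK : mu K \is a fin_num by exact: fin_num_measure.
  move: hk h1 muK; rewrite -(fineK finS) -(fineK finK) -EFinD !lee_fin => hk h1 hmK.
  have := wpos j; lra.
have ub : forall x i, K x -> ((`|c x (y i)|)%:E <= cnormK c y K)%E.
  by move=> x i Kx; apply: ereal_sup_ubound; exists x, i.
case eC : (cnormK c y K) => [C| |].
- have diff : forall i j, g0 i - g0 j <= C.
    move=> i j; apply/ler_addgt0Pr => e e0.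
    have [x [Kx Sx]] := exK j e e0.
    have h := Sx i.
    have := ub x i Kx; rewrite eC lee_fin ger0_norm // => hc.
    have := c0 x (y j); lra.
  have [k kmin] : exists k, forall i, g0 k <= g0 i.
    case: (@Order.TotalTheory.arg_minP _ _ _ i0 xpredT g0 isT) => k _ h.
    by exists k => i; exact: h.
  exists (fun i => g0 i - g0 k); split; last first.
    by move=> i; rewrite lee_fin ger0_norm ?subr_ge0 //; exact: diff.
  suff -> : Hsd mu y w c (fun i => g0 i - g0 k) = Hsd mu y w c g0 by [].
  have finf : (\int[mu]_x (- ctrans c y g0 x))%E \is a fin_num.
    by move: Hfin; rewrite /Hsd fin_numB => /andP[].
  have mf : measurable_fun [set: Rd R d] (fun x => - ctrans c y g0 x)%E.
    by apply: measurableT_comp; [exact: oppe_measurable|exact: ct_meas].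
  have intf := Lint R d mu _ _ mf (fun x => negct_bound R d M y c i0 g0 x c0) finf.
  have E : forall x, (- ctrans c y (fun i => (g0 i - g0 k)%R) x =
                      - ctrans c y g0 x + (- g0 k)%R%:E)%E.
    move=> x; rewrite (ct_shift R d M y c i0).
    have [l ->] := ct_eq R d M y c i0 g0 x.
    by rewrite -EFinD -!EFinN -EFinD opprD.
  rewrite /Hsd.
  under eq_integral => x _ do rewrite E.
  rewrite (integralD measurableT intf (finite_measure_integrable_cst mu (- g0 k) measurableT)).
  have ic : (\int[mu]_x (EFin \o cst (- g0 k)%R) x = (- g0 k)%:E)%E.
    rewrite (integral_cst mu measurableT ((- g0 k)%R)%:E).
    rewrite [X in (_ * X)%E](_ : _ = 1%E) ?mule1 //.
    exact: probability_setT.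
  rewrite ic (sum_shift _ _ _ g0 (g0 k) wsum) -(fineK finf) -?EFinD -?EFinB.
  by congr (_%:E); ring.
- by exists g0; split => // j; exact: leey.
- exfalso; have [x [Kx _]] := exK i0 1 ltr01.
  by have := ub x i0 Kx; rewrite eC leeNy_eq.
Qed.
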